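(* For $x\in\mathbb{R}$ let \[ H(x)=\begin{bmatrix}1 & -ix & ix & x\\ ix & 1 & -ix & x\\ -ix & ix & 1 & x\\ x & x & x & 1\end{bmatrix}. \] For $x=1/\sqrt{3}$, the matrix $H(x)$ has rank $2$ and spans an extremal ray of the cone $\mathcal{M}_4^+[e]$.
   Context: $\mathcal{M}_4^+[e]$ is the cone of $4\times4$ complex positive semidefinite matrices whose diagonal entries are all equal (complex correlation matrices up to scaling). An extremal ray of a cone $\mathcal{C}$ is $\mathbb{R}_+v$, $v\ne0$, such that $v=a+b$ with $a,b\in\mathcal{C}$ implies $a,b\in\mathbb{R}_+v$. *)

(* Defs.v *)
From mathcomp Require Import all_boot all_algebra.
From mathcomp Require Import complex.
From mathcomp Require Import reals.
Import GRing.Theory Num.Theory.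
Local Open Scope ring_scope.

Set Implicit Arguments.
Unset Strict Implicit.
Unset Printing Implicit Defensive.

Definition ctrmx (C : numClosedFieldType) m n (A : 'M[C]_(m, n)) : 'M[C]_(n, m) :=
  \matrix_(i, j) (A j i)^*.

Definition psdmx (C : numClosedFieldType) n (A : 'M[C]_n) : Prop :=
  ctrmx A = A /\ forall v : 'cV[C]_n, 0 <= (ctrmx v *m A *m v) 0 0.

Definition Mplus_e (C : numClosedFieldType) n (A : 'M[C]_n) : Prop :=
  psdmx A /\ forall i j : 'I_n, A i i = A j j.

Definition in_ray (R : realType) n (v a : 'M[R[i]]_n) : Prop :=
  exists t : R, 0 <= t /\ a = (t%:C)%C *: v.

Definition extremal_ray (R : realType) n (K : 'M[R[i]]_n -> Prop)
    (v : 'M[R[i]]_n) : Prop :=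
  K v /\ v != 0 /\
  forall a b : 'M[R[i]]_n, K a -> K b -> v = a + b -> in_ray v a /\ in_ray v b.

Definition Hmx (R : realType) (x : R) : 'M[R[i]]_4 :=
  let X : R[i] := (x%:C)%C in
  let I : R[i] := 'i%C in
  let rows : seq (seq R[i]) :=
    [:: [:: 1; - (I * X); I * X; X];
        [:: I * X; 1; - (I * X); X];
        [:: - (I * X); I * X; 1; X];
        [:: X; X; X; 1]] in
  \matrix_(r < 4, c < 4) nth 0 (nth [::] rows r) c.

(* Main.v *)
Require Import Defs.
From mathcomp Require Import all_boot all_algebra.
From mathcomp Require Import complex.
From mathcomp Require Import reals.
From mathcomp Require Import ring order.
Import Order.TTheory GRing.Theory Num.Theory.
Local Open Scope ring_scope.

Section Gen.
Variable C : numClosedFieldType.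

Lemma ctrmx_mul m n p (A : 'M[C]_(m, n)) (B : 'M[C]_(n, p)) :
  ctrmx (A *m B) = ctrmx B *m ctrmx A.
Proof.
apply/matrixP => i j; rewrite !mxE rmorph_sum; apply: eq_bigr => k _.
by rewrite !mxE rmorphM mulrC.
Qed.

Lemma ctrmxK m n (A : 'M[C]_(m, n)) : ctrmx (ctrmx A) = A.
Proof. by apply/matrixP => i j; rewrite !mxE conjCK. Qed.

Lemma ctrmxD m n (A B : 'M[C]_(m, n)) : ctrmx (A + B) = ctrmx A + ctrmx B.
Proof. by apply/matrixP => i j; rewrite !mxE rmorphD. Qed.

Lemma ctrmxZ m n c (A : 'M[C]_(m, n)) : ctrmx (c *: A) = c^* *: ctrmx A.
Proof. by apply/matrixP => i j; rewrite !mxE rmorphM. Qed.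

Lemma ctrmx0 m n : ctrmx (0 : 'M[C]_(m, n)) = 0.
Proof. by apply/matrixP => i j; rewrite !mxE rmorph0. Qed.

Lemma e00D (M N : 'M[C]_1) : (M + N) 0 0 = M 0 0 + N 0 0.
Proof. by rewrite mxE. Qed.
Lemma e00Z c (M : 'M[C]_1) : (c *: M) 0 0 = c * M 0 0.
Proof. by rewrite mxE. Qed.
Lemma e00C (M : 'M[C]_1) : (ctrmx M) 0 0 = (M 0 0)^*.
Proof. by rewrite mxE. Qed.

Lemma herm_row n (A : 'M[C]_n) (k : 'cV[C]_n) :
  ctrmx A = A -> A *m k = 0 -> ctrmx k *m A = 0.
Proof.
by move=> hA hk; rewrite -[X in _ *m X]hA -ctrmx_mul hk ctrmx0.
Qed.

Lemma psd_ker n (A : 'M[C]_n) (v : 'cV[C]_n) :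
  psdmx A -> (ctrmx v *m A *m v) 0 0 = 0 -> A *m v = 0.
Proof.
move=> [hA hpos] hv.
have key : forall w : 'cV[C]_n, (ctrmx w *m A *m v) 0 0 = 0.
  move=> w.
  set c := (ctrmx w *m A *m v) 0 0.
  set d := (ctrmx w *m A *m w) 0 0.
  have hd : 0 <= d by apply: hpos.
  have hc' : (ctrmx v *m A *m w) 0 0 = c^*.
    by rewrite /c -e00C !ctrmx_mul ctrmxK hA mulmxA.
  set r := (d + 1)^-1.
  have hd1 : 0 < d + 1 by rewrite ltr_wpDl // ltr01.
  have hr : 0 < r by rewrite invr_gt0.
  have hrc : r^* = r by rewrite geC0_conj // ltW.
  have hrd : r * d < 1.
    by rewrite mulrC ltr_pdivrMr // mul1r ltrDl ltr01.
  have hrd2 : r * (r * d - 2) < 0.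
    rewrite pmulr_rlt0 // subr_lt0; apply: (lt_trans hrd).
    by rewrite ltr1n.
  have := hpos (v + (- r * c) *: w).
  rewrite ctrmxD ctrmxZ !mulmxDl !mulmxDr -!scalemxAl -!scalemxAr.
  rewrite !e00D !e00Z hv hc' -/c -/d.
  have -> : (- r * c)^* = - r * c^*. rewrite rmorphM rmorphN; congr (- _ * _); exact: hrc.
  have -> : 0 + - r * c * c^* + ((- r * c^*) * c + (- r * c^*) * ((- r * c) * d))
     = (c * c^*) * (r * (r * d - 2)) by ring.
  rewrite nmulr_lge0 // => hle.
  apply/eqP; rewrite -mul_conjC_eq0 eq_le hle mul_conjC_ge0.
  done.
apply/matrixP => i j; rewrite (ord1 j) [RHS]mxE.
have := key (delta_mx i 0).
rewrite -mulmxA mxE (bigD1 i) //= big1 ?addr0.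
  by rewrite !mxE eqxx /= conjC1 mul1r.
by move=> k hk; rewrite !mxE (negbTE hk) /= conjC0 mul0r.
Qed.

End Gen.

Notation o0 := (@Ordinal 4 0 isT).
Notation o1 := (@Ordinal 4 1 isT).
Notation o2 := (@Ordinal 4 2 isT).
Notation o3 := (@Ordinal 4 3 isT).
Notation p0 := (@Ordinal 2 0 isT).
Notation p1 := (@Ordinal 2 1 isT).

Lemma forall4 (P : 'I_4 -> Prop) : P o0 -> P o1 -> P o2 -> P o3 -> forall i, P i.
Proof.
move=> h0 h1 h2 h3 [[|[|[|[|m]]]] hm] //; by rewrite (bool_irrelevance hm isT).
Qed.

Lemma forall2 (P : 'I_2 -> Prop) : P p0 -> P p1 -> forall i, P i.
Proof.
move=> h0 h1 [[|[|m]] hm] //; by rewrite (bool_irrelevance hm isT).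
Qed.

Lemma sum4 (C : nmodType) (F : 'I_4 -> C) : \sum_(j < 4) F j = F o0 + F o1 + F o2 + F o3.
Proof.
rewrite !big_ord_recl big_ord0 addr0 !addrA.
by repeat congr (_ + _); congr F; apply: val_inj.
Qed.

Lemma certD (C : numClosedFieldType) (D : nat) (comb L R : C) :
  (0 < D)%N -> comb = 0 -> D%:R * (L - R) = comb -> L = R.
Proof.
move=> hD -> /eqP; rewrite mulf_eq0 pnatr_eq0 (negbTE (lt0n_neq0 hD)) /= subr_eq0.
by move/eqP.
Qed.

Lemma eq0_trans (C : numClosedFieldType) (e e' : C) : e' = 0 -> e = e' -> e = 0.
Proof. by move=> -> . Qed.

Definition Hg (C : numClosedFieldType) (I X : C) : 'M[C]_4 :=
  let rows : seq (seq C) :=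
    [:: [:: 1; - (I * X); I * X; X];
        [:: I * X; 1; - (I * X); X];
        [:: - (I * X); I * X; 1; X];
        [:: X; X; X; 1]] in
  \matrix_(r < 4, c < 4) nth 0 (nth [::] rows r) c.

Lemma quad_rank1 (C : numClosedFieldType) n (w v : 'cV[C]_n) :
  (ctrmx v *m (w *m ctrmx w) *m v) 0 0 =
  (ctrmx v *m w) 0 0 * ((ctrmx v *m w) 0 0)^*.
Proof.
rewrite !mulmxA -mulmxA -e00C ctrmx_mul ctrmxK.
by rewrite mxE big_ord1.
Qed.

Definition good (C : numClosedFieldType) (I X u v : C) :=
  I * I + 1 = 0 /\ 3 * X * X - 1 = 0 /\ 6 * u - 1 = 0 /\ 2 * v - 1 = 0 /\
      I^* = - I /\ X^* = X /\ u^* = u /\ 0 <= u.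

Arguments good {C}.
Arguments psd_ker {C n A v}.
Arguments herm_row {C n A k}.
Arguments certD {C}.
Arguments Hg {C}.

Section Spec.
Variables (C : numClosedFieldType) (I X u v : C).
Hypothesis G : good I X u v.

Local Notation w1 := (\col_(i < 4) nth 0 [:: X; X; X; 1] i).
Local Notation w1s := (\row_(i < 4) nth 0 [:: X; X; X; 1] i).
Local Notation w2 := (\col_(i < 4) nth 0 [:: 2; 3*I*X - 1; -(3*I*X) - 1; 0] i).
Local Notation w2s := (\row_(i < 4) nth 0 [:: 2; -(3*I*X) - 1; 3*I*X - 1; 0] i).
Local Notation k1 := (\col_(i < 4) nth 0 [:: 1; 1; 1; -(3*X)] i).
Local Notation k1s := (\row_(i < 4) nth 0 [:: 1; 1; 1; -(3*X)] i).
Local Notation k2 := (\col_(i < 4) nth 0 [:: 2; -1 - 3*I*X; -1 + 3*I*X; 0] i).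
Local Notation k2s := (\row_(i < 4) nth 0 [:: 2; -1 + 3*I*X; -1 - 3*I*X; 0] i).
Local Notation e4 := (\col_(i < 4) nth 0 [:: 0; 0; 0; 1] i).
Local Notation Pm := (\matrix_(i < 2, j < 4) nth 0 (nth [::] [:: [:: 1; 0; 0; 0]; [:: 0; 0; 0; 1]] i) j).
Local Notation Qm := (\matrix_(i < 4, j < 2) nth 0 (nth [::] [:: [:: 3*v; -(3*v*X)]; [:: 0; 0]; [:: 0; 0]; [:: -(3*v*X); 3*v]] i) j).
Local Notation H := (Hg I X).

Ltac conjtac hIc hXc :=
  rewrite !mxE /= ?(rmorphB, rmorphD, rmorphN, rmorphM, rmorph1, rmorph0, rmorph_nat) /= ?hIc ?hXc;
  try ring.

Lemma cw1 : ctrmx w1 = w1s.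
Proof using G.
case: G => hI [hX [hu [hv [hIc [hXc [huc hu0]]]]]].
apply/matrixP => i j; rewrite (ord1 i); move: j; apply: forall4; conjtac hIc hXc.
Qed.
Lemma cw2 : ctrmx w2 = w2s.
Proof using G.
case: G => hI [hX [hu [hv [hIc [hXc [huc hu0]]]]]].
apply/matrixP => i j; rewrite (ord1 i); move: j; apply: forall4; conjtac hIc hXc.
Qed.
Lemma ck1 : ctrmx k1 = k1s.
Proof using G.
case: G => hI [hX [hu [hv [hIc [hXc [huc hu0]]]]]].
apply/matrixP => i j; rewrite (ord1 i); move: j; apply: forall4; conjtac hIc hXc.
Qed.
Lemma ck2 : ctrmx k2 = k2s.
Proof using G.
case: G => hI [hX [hu [hv [hIc [hXc [huc hu0]]]]]].
apply/matrixP => i j; rewrite (ord1 i); move: j; apply: forall4; conjtac hIc hXc.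
Qed.
Lemma cw1s : ctrmx w1s = w1.
Proof using G. by rewrite -cw1 ctrmxK. Qed.
Lemma cw2s : ctrmx w2s = w2.
Proof using G. by rewrite -cw2 ctrmxK. Qed.


Lemma Hdec : H = w1 *m w1s + u *: (w2 *m w2s).
Proof using G.
case: G => hI [hX [hu [hv [hIc [hXc [huc hu0]]]]]].
apply/matrixP; apply: forall4; apply: forall4; rewrite /Hg !mxE !big_ord1 !mxE /=;
[ apply: (certD 3 ((((-1))) * (3*X*X-1) + (((-2))) * (6*u-1))%R); [done | rewrite ?hX ?hu; ring | ring]
  | apply: (certD 3 ((((-1))) * (3*X*X-1) + ((1) + (3*I*X)) * (6*u-1))%R); [done | rewrite ?hX ?hu; ring | ring]
  | apply: (certD 3 ((((-1))) * (3*X*X-1) + ((1) + ((-3)*I*X)) * (6*u-1))%R); [done | rewrite ?hX ?hu; ring | ring]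
  | apply: (certD 1 (0)%R); [done |  ring | ring]
  | apply: (certD 3 ((((-1))) * (3*X*X-1) + ((1) + ((-3)*I*X)) * (6*u-1))%R); [done | rewrite ?hX ?hu; ring | ring]
  | apply: (certD 3 (((27*X^+2*u)) * (I*I+1) + (((-1)) + ((-9)*u)) * (3*X*X-1) + (((-2))) * (6*u-1))%R); [done | rewrite ?hI ?hX ?hu; ring | ring]
  | apply: (certD 3 ((((-27)*X^+2*u)) * (I*I+1) + (((-1)) + (9*u)) * (3*X*X-1) + ((1) + (3*I*X)) * (6*u-1))%R); [done | rewrite ?hI ?hX ?hu; ring | ring]
  | apply: (certD 1 (0)%R); [done |  ring | ring]
  | apply: (certD 3 ((((-1))) * (3*X*X-1) + ((1) + (3*I*X)) * (6*u-1))%R); [done | rewrite ?hX ?hu; ring | ring]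
  | apply: (certD 3 ((((-27)*X^+2*u)) * (I*I+1) + (((-1)) + (9*u)) * (3*X*X-1) + ((1) + ((-3)*I*X)) * (6*u-1))%R); [done | rewrite ?hI ?hX ?hu; ring | ring]
  | apply: (certD 3 (((27*X^+2*u)) * (I*I+1) + (((-1)) + ((-9)*u)) * (3*X*X-1) + (((-2))) * (6*u-1))%R); [done | rewrite ?hI ?hX ?hu; ring | ring]
  | apply: (certD 1 (0)%R); [done |  ring | ring]
  | apply: (certD 1 (0)%R); [done |  ring | ring]
  | apply: (certD 1 (0)%R); [done |  ring | ring]
  | apply: (certD 1 (0)%R); [done |  ring | ring]
  | apply: (certD 1 (0)%R); [done |  ring | ring] ].
Qed.

Lemma K11 : w1s *m k1 = 0.
Proof using G.
case: G => hI [hX [hu [hv [hIc [hXc [huc hu0]]]]]].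
apply/matrixP => i j; rewrite (ord1 i) (ord1 j) !mxE sum4 !mxE /=.
apply: (certD 1 (0)%R); [done |  ring | ring].
Qed.

Lemma K12 : w1s *m k2 = 0.
Proof using G.
case: G => hI [hX [hu [hv [hIc [hXc [huc hu0]]]]]].
apply/matrixP => i j; rewrite (ord1 i) (ord1 j) !mxE sum4 !mxE /=.
apply: (certD 1 (0)%R); [done |  ring | ring].
Qed.

Lemma K21 : w2s *m k1 = 0.
Proof using G.
case: G => hI [hX [hu [hv [hIc [hXc [huc hu0]]]]]].
apply/matrixP => i j; rewrite (ord1 i) (ord1 j) !mxE sum4 !mxE /=.
apply: (certD 1 (0)%R); [done |  ring | ring].
Qed.

Lemma K22 : w2s *m k2 = 0.
Proof using G.
case: G => hI [hX [hu [hv [hIc [hXc [huc hu0]]]]]].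
apply/matrixP => i j; rewrite (ord1 i) (ord1 j) !mxE sum4 !mxE /=.
apply: (certD 1 (((18*X^+2)) * (I*I+1) + (((-6))) * (3*X*X-1))%R); [done | rewrite ?hI ?hX; ring | ring].
Qed.

Lemma Hker1 : H *m k1 = 0.
Proof using G. by rewrite Hdec mulmxDl -scalemxAl -!mulmxA K11 K21 !mulmx0 scaler0 addr0. Qed.
Lemma Hker2 : H *m k2 = 0.
Proof using G. by rewrite Hdec mulmxDl -scalemxAl -!mulmxA K12 K22 !mulmx0 scaler0 addr0. Qed.

Lemma rank_up : (\rank H <= 2)%N.
Proof using G.
rewrite Hdec (_ : w1 *m w1s + u *: (w2 *m w2s) = row_mx w1 w2 *m col_mx w1s (u *: w2s)); last first.
  by rewrite mul_row_col scalemxAr.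
exact: leq_trans (mxrankM_maxl _ _) (rank_leq_col _).
Qed.

Lemma PHQ : Pm *m H *m Qm = 1%:M.
Proof using G.
case: G => hI [hX [hu [hv [hIc [hXc [huc hu0]]]]]].
apply/matrixP; apply: forall2; apply: forall2; rewrite !mxE !sum4 !mxE !sum4 /Hg !mxE /=;
[ apply: (certD 1 (((-(v))) * (3*X*X-1) + ((1)) * (2*v-1))%R); [done | rewrite ?hX ?hv; ring | ring]
  | apply: (certD 1 (0)%R); [done |  ring | ring]
  | apply: (certD 1 (0)%R); [done |  ring | ring]
  | apply: (certD 1 (((-(v))) * (3*X*X-1) + ((1)) * (2*v-1))%R); [done | rewrite ?hX ?hv; ring | ring] ].
Qed.

Lemma rank_lo : (2 <= \rank H)%N.
Proof using G.
apply: (@leq_trans (\rank (Pm *m H *m Qm))); first by rewrite PHQ mxrank1.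
exact: leq_trans (mxrankM_maxl _ _) (mxrankM_maxr _ _).
Qed.

Lemma Hpsd : psdmx H.
Proof using G.
case: G => hI [hX [hu [hv [hIc [hXc [huc hu0]]]]]].
have Hd : H = w1 *m ctrmx w1 + u *: (w2 *m ctrmx w2) by rewrite cw1 cw2 Hdec.
split; first by rewrite Hd ctrmxD ctrmxZ !ctrmx_mul !ctrmxK huc.
move=> y; rewrite Hd mulmxDr mulmxDl -scalemxAr -scalemxAl e00D e00Z !quad_rank1.
apply: addr_ge0; first exact: mul_conjC_ge0.
by apply: mulr_ge0 => //; exact: mul_conjC_ge0.
Qed.

Lemma Hdiag : forall i j, H i i = H j j.
Proof. by apply: forall4; apply: forall4; rewrite /Hg !mxE. Qed.

Lemma ext_gen (a b : 'M[C]_4) : Mplus_e a -> Mplus_e b -> H = a + b ->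
  a = a o3 o3 *: H /\ 0 <= a o3 o3.
Proof using G.
case: G => hI [hX [hu [hv [hIc [hXc [huc hu0]]]]]].
move=> [pa da] [pb db] hab.
have q0 : forall k : 'cV[C]_4, H *m k = 0 -> (ctrmx k *m a *m k) 0 0 = 0.
  move=> k hk.
  have hs : (ctrmx k *m a *m k) 0 0 + (ctrmx k *m b *m k) 0 0 = 0.
    by rewrite -e00D -mulmxDl -mulmxDr -hab -mulmxA hk mulmx0 mxE.
  have h1 := pa.2 k; have h2 := pb.2 k.
  by move/eqP: hs; rewrite paddr_eq0 // => /andP [/eqP -> _].
have hka1 := psd_ker pa (q0 _ Hker1).
have hka2 := psd_ker pa (q0 _ Hker2).
have hkr1 := herm_row pa.1 hka1; rewrite ck1 in hkr1.
have hkr2 := herm_row pa.1 hka2; rewrite ck2 in hkr2.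
have Ea0 : ((a o0 o0) + (a o0 o1) + (a o0 o2) + ((-3)*X*a o0 o3)) = 0.
  have := congr1 (fun M : 'M[C]_(4,1) => M o0 0) hka1; rewrite /= !mxE sum4 !mxE /= => <-; ring.
have Eb0 : ((2*a o0 o0) + (-(a o0 o1)) + (-(a o0 o2)) + ((-3)*I*X*a o0 o1) + (3*I*X*a o0 o2)) = 0.
  have := congr1 (fun M : 'M[C]_(4,1) => M o0 0) hka2; rewrite /= !mxE sum4 !mxE /= => <-; ring.
have Ea1 : ((a o1 o0) + (a o1 o1) + (a o1 o2) + ((-3)*X*a o1 o3)) = 0.
  have := congr1 (fun M : 'M[C]_(4,1) => M o1 0) hka1; rewrite /= !mxE sum4 !mxE /= => <-; ring.
have Eb1 : ((2*a o1 o0) + (-(a o1 o1)) + (-(a o1 o2)) + ((-3)*I*X*a o1 o1) + (3*I*X*a o1 o2)) = 0.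
  have := congr1 (fun M : 'M[C]_(4,1) => M o1 0) hka2; rewrite /= !mxE sum4 !mxE /= => <-; ring.
have Ea2 : ((a o2 o0) + (a o2 o1) + (a o2 o2) + ((-3)*X*a o2 o3)) = 0.
  have := congr1 (fun M : 'M[C]_(4,1) => M o2 0) hka1; rewrite /= !mxE sum4 !mxE /= => <-; ring.
have Eb2 : ((2*a o2 o0) + (-(a o2 o1)) + (-(a o2 o2)) + ((-3)*I*X*a o2 o1) + (3*I*X*a o2 o2)) = 0.
  have := congr1 (fun M : 'M[C]_(4,1) => M o2 0) hka2; rewrite /= !mxE sum4 !mxE /= => <-; ring.
have Ea3 : ((a o3 o0) + (a o3 o1) + (a o3 o2) + ((-3)*X*a o3 o3)) = 0.
  have := congr1 (fun M : 'M[C]_(4,1) => M o3 0) hka1; rewrite /= !mxE sum4 !mxE /= => <-; ring.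
have Eb3 : ((2*a o3 o0) + (-(a o3 o1)) + (-(a o3 o2)) + ((-3)*I*X*a o3 o1) + (3*I*X*a o3 o2)) = 0.
  have := congr1 (fun M : 'M[C]_(4,1) => M o3 0) hka2; rewrite /= !mxE sum4 !mxE /= => <-; ring.
have Ec0 : ((a o0 o0) + (a o1 o0) + (a o2 o0) + ((-3)*X*a o3 o0)) = 0.
  have := congr1 (fun M : 'M[C]_(1,4) => M 0 o0) hkr1; rewrite /= !mxE sum4 !mxE /= => <-; ring.
have Ed0 : ((2*a o0 o0) + (-(a o1 o0)) + (-(a o2 o0)) + (3*I*X*a o1 o0) + ((-3)*I*X*a o2 o0)) = 0.
  have := congr1 (fun M : 'M[C]_(1,4) => M 0 o0) hkr2; rewrite /= !mxE sum4 !mxE /= => <-; ring.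
have Ec1 : ((a o0 o1) + (a o1 o1) + (a o2 o1) + ((-3)*X*a o3 o1)) = 0.
  have := congr1 (fun M : 'M[C]_(1,4) => M 0 o1) hkr1; rewrite /= !mxE sum4 !mxE /= => <-; ring.
have Ed1 : ((2*a o0 o1) + (-(a o1 o1)) + (-(a o2 o1)) + (3*I*X*a o1 o1) + ((-3)*I*X*a o2 o1)) = 0.
  have := congr1 (fun M : 'M[C]_(1,4) => M 0 o1) hkr2; rewrite /= !mxE sum4 !mxE /= => <-; ring.
have Ec2 : ((a o0 o2) + (a o1 o2) + (a o2 o2) + ((-3)*X*a o3 o2)) = 0.
  have := congr1 (fun M : 'M[C]_(1,4) => M 0 o2) hkr1; rewrite /= !mxE sum4 !mxE /= => <-; ring.
have Ed2 : ((2*a o0 o2) + (-(a o1 o2)) + (-(a o2 o2)) + (3*I*X*a o1 o2) + ((-3)*I*X*a o2 o2)) = 0.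
  have := congr1 (fun M : 'M[C]_(1,4) => M 0 o2) hkr2; rewrite /= !mxE sum4 !mxE /= => <-; ring.
have Ec3 : ((a o0 o3) + (a o1 o3) + (a o2 o3) + ((-3)*X*a o3 o3)) = 0.
  have := congr1 (fun M : 'M[C]_(1,4) => M 0 o3) hkr1; rewrite /= !mxE sum4 !mxE /= => <-; ring.
have Ed3 : ((2*a o0 o3) + (-(a o1 o3)) + (-(a o2 o3)) + (3*I*X*a o1 o3) + ((-3)*I*X*a o2 o3)) = 0.
  have := congr1 (fun M : 'M[C]_(1,4) => M 0 o3) hkr2; rewrite /= !mxE sum4 !mxE /= => <-; ring.
have Ee0 : ((a o0 o0) + (-(a o3 o3))) = 0.
  by rewrite (da o0 o3) addrN.
have Ee1 : ((a o1 o1) + (-(a o3 o3))) = 0.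
  by rewrite (da o1 o3) addrN.
have Ee2 : ((a o2 o2) + (-(a o3 o3))) = 0.
  by rewrite (da o2 o3) addrN.
split; last first.
  have := pa.2 e4.
  have -> : (ctrmx e4 *m a *m e4) 0 0 = a o3 o3.
    rewrite /ctrmx !mxE !sum4 !mxE !sum4 !mxE /= ?conjC0 ?conjC1; ring.
  done.
apply/matrixP; apply: forall4; apply: forall4; rewrite /Hg !mxE /=;
[ apply: (certD 1 (((1)) * ((a o0 o0) + (-(a o3 o3))))%R); [done | rewrite ?Ee0; ring | ring]
  | apply: (certD 12 ((((-3)) + ((-3)*I*X)) * ((2*a o2 o0) + (-(a o2 o1)) + (-(a o2 o2)) + ((-3)*I*X*a o2 o1) + (3*I*X*a o2 o2)) + ((6*X) + (2*I)) * ((a o3 o0) + (a o3 o1) + (a o3 o2) + ((-3)*X*a o3 o3)) + ((2*I)) * ((2*a o3 o0) + (-(a o3 o1)) + (-(a o3 o2)) + ((-3)*I*X*a o3 o1) + (3*I*X*a o3 o2)) + ((2) + (6*I*X)) * ((a o0 o0) + (a o1 o0) + (a o2 o0) + ((-3)*X*a o3 o0)) + (((-1)) + (3*I*X)) * ((2*a o0 o0) + (-(a o1 o0)) + (-(a o2 o0)) + (3*I*X*a o1 o0) + ((-3)*I*X*a o2 o0)) + ((4)) * ((a o0 o1) + (a o1 o1) + (a o2 o1) + ((-3)*X*a o3 o1)) + ((4)) * ((2*a o0 o1) + (-(a o1 o1)) + (-(a o2 o1)) + (3*I*X*a o1 o1) + ((-3)*I*X*a o2 o1)) + (((-12)*I*X))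 * ((a o0 o0) + (-(a o3 o3))) + (((-12)*I*X)) * ((a o1 o1) + (-(a o3 o3))) + (((-6)) + (6*I*X)) * ((a o2 o2) + (-(a o3 o3))) + ((6*X*a o3 o1) + ((-6)*X*a o3 o2) + ((-9)*X^+2*a o1 o0) + (9*X^+2*a o2 o0) + ((-9)*X^+2*a o2 o1) + (9*X^+2*a o2 o2)) * (I*I+1) + ((3*a o1 o0) + ((-3)*a o2 o0) + (3*a o2 o1) + ((-3)*a o2 o2) + (6*a o3 o3) + (6*I*a o3 o0)) * (3*X*X-1))%R); [done | rewrite ?Eb2 ?Ea3 ?Eb3 ?Ec0 ?Ed0 ?Ec1 ?Ed1 ?Ee0 ?Ee1 ?Ee2 ?hI ?hX; ring | ring]
  | apply: (certD 12 ((((-3)) + ((-9)*I*X)) * ((2*a o0 o0) + (-(a o0 o1)) + (-(a o0 o2)) + ((-3)*I*X*a o0 o1) + (3*I*X*a o0 o2)) + (((-3)) + (3*I*X)) * ((2*a o2 o0) + (-(a o2 o1)) + (-(a o2 o2)) + ((-3)*I*X*a o2 o1) + (3*I*X*a o2 o2)) + ((6*X) + ((-2)*I)) * ((a o3 o0) + (a o3 o1) + (a o3 o2) + ((-3)*X*a o3 o3)) + ((3*X) + (I)) * ((2*a o3 o0) + (-(a o3 o1)) + (-(a o3 o2)) + ((-3)*I*X*a o3 o1) + (3*I*X*a o3 o2)) + ((4)) * ((a o0 o0) + (a o1 o0) + (a o2 o0) + ((-3)*X*a o3 o0)) + ((1) + (3*I*X)) * ((2*a o0 o0) + (-(a o1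 o0)) + (-(a o2 o0)) + (3*I*X*a o1 o0) + ((-3)*I*X*a o2 o0)) + ((2) + ((-6)*I*X)) * ((a o0 o1) + (a o1 o1) + (a o2 o1) + ((-3)*X*a o3 o1)) + ((2) + ((-6)*I*X)) * ((2*a o0 o1) + (-(a o1 o1)) + (-(a o2 o1)) + (3*I*X*a o1 o1) + ((-3)*I*X*a o2 o1)) + ((12*I*X)) * ((a o0 o0) + (-(a o3 o3))) + (((-6)) + ((-6)*I*X)) * ((a o1 o1) + (-(a o3 o3))) + ((12*I*X)) * ((a o2 o2) + (-(a o3 o3))) + ((3*X*a o3 o1) + ((-3)*X*a o3 o2) + ((-27)*X^+2*a o0 o1) + (27*X^+2*a o0 o2) + ((-9)*X^+2*a o1 o0) + (18*X^+2*a o1 o1) + (9*X^+2*a o2 o0) + ((-9)*X^+2*a o2 o1) + ((-9)*X^+2*a o2 o2)) * (I*I+1) + ((9*a o0 o1) + ((-9)*a o0 o2) + (3*a o1 o0) + ((-6)*a o1 o1) + ((-3)*a o2 o0) + (3*a o2 o1) + (3*a o2 o2) + (6*a o3 o3) + ((-3)*I*a o3 o1) + ((-3)*I*a o3 o2)) * (3*X*X-1))%R); [done | rewrite ?Eb0 ?Eb2 ?Ea3 ?Eb3 ?Ec0 ?Ed0 ?Ec1 ?Ed1 ?Ee0 ?Ee1 ?Ee2 ?hI ?hX; ring | ring]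
  | apply: (certD 12 ((((-12)*X)) * ((a o0 o0) + (a o0 o1) + (a o0 o2) + ((-3)*X*a o0 o3)) + (((-3)*X) + ((-3)*I)) * ((2*a o0 o0) + (-(a o0 o1)) + (-(a o0 o2)) + ((-3)*I*X*a o0 o1) + (3*I*X*a o0 o2)) + (((-6)*X)) * ((2*a o2 o0) + (-(a o2 o1)) + (-(a o2 o2)) + ((-3)*I*X*a o2 o1) + (3*I*X*a o2 o2)) + ((4)) * ((a o3 o0) + (a o3 o1) + (a o3 o2) + ((-3)*X*a o3 o3)) + ((1) + (3*I*X)) * ((2*a o3 o0) + (-(a o3 o1)) + (-(a o3 o2)) + ((-3)*I*X*a o3 o1) + (3*I*X*a o3 o2)) + ((6*X) + (2*I)) * ((a o0 o0) + (a o1 o0) + (a o2 o0) + ((-3)*X*a o3 o0)) + ((2*I)) * ((2*a o0 o0) + (-(a o1 o0)) + (-(a o2 o0)) + (3*I*X*a o1 o0) + ((-3)*I*X*a o2 o0)) + ((6*X) + ((-2)*I)) * ((a o0 o1) + (a o1 o1) + (a o2 o1) + ((-3)*X*a o3 o1)) + ((6*X) + ((-2)*I)) * ((2*a o0 o1) + (-(a o1 o1)) + (-(a o2 o1)) + (3*I*X*a o1 o1) + ((-3)*I*X*a o2 o1)) + ((12*X)) * ((a o0 o0) + (-(a o3 o3))) + (((-6)*X) + ((-6)*I)) * ((a o1 o1) + (-(a o3 o3))) + (((-6)*X) + (6*I)) * ((a o2 o2) + (-(a o3 o3))) + (((-9)*X*a o0 o1) + (9*X*a o0 o2) + ((-6)*X*a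 o1 o0) + (6*X*a o1 o1) + (6*X*a o2 o0) + ((-6)*X*a o2 o1) + (9*X^+2*a o3 o1) + ((-9)*X^+2*a o3 o2)) * (I*I+1) + (((-12)*a o0 o3) + (6*a o3 o0) + (3*a o3 o1) + (3*a o3 o2) + ((-3)*I*a o0 o1) + (3*I*a o0 o2) + ((-6)*I*a o1 o1) + (6*I*a o2 o2)) * (3*X*X-1))%R); [done | rewrite ?Ea0 ?Eb0 ?Eb2 ?Ea3 ?Eb3 ?Ec0 ?Ed0 ?Ec1 ?Ed1 ?Ee0 ?Ee1 ?Ee2 ?hI ?hX; ring | ring]
  | apply: (certD 12 ((((-6)*I*X)) * ((2*a o2 o0) + (-(a o2 o1)) + (-(a o2 o2)) + ((-3)*I*X*a o2 o1) + (3*I*X*a o2 o2)) + ((6*X) + ((-2)*I)) * ((a o3 o0) + (a o3 o1) + (a o3 o2) + ((-3)*X*a o3 o3)) + ((3*X) + (I)) * ((2*a o3 o0) + (-(a o3 o1)) + (-(a o3 o2)) + ((-3)*I*X*a o3 o1) + (3*I*X*a o3 o2)) + ((4)) * ((a o0 o0) + (a o1 o0) + (a o2 o0) + ((-3)*X*a o3 o0)) + (((-2)) + ((-6)*I*X)) * ((2*a o0 o0) + (-(a o1 o0)) + (-(a o2 o0)) + (3*I*X*a o1 o0) + ((-3)*I*X*a o2 o0)) + ((2) + ((-6)*I*X)) * ((a o0 o1) + (a o1 o1) + (a o2 o1) + ((-3)*X*a o3 o1)) + (((-1)) + (3*I*X)) * ((2*a o0 o1) + (-(a o1 o1)) + (-(a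 o2 o1)) + (3*I*X*a o1 o1) + ((-3)*I*X*a o2 o1)) + ((12*I*X)) * ((a o0 o0) + (-(a o3 o3))) + ((12*I*X)) * ((a o1 o1) + (-(a o3 o3))) + (((-6)) + ((-6)*I*X)) * ((a o2 o2) + (-(a o3 o3))) + ((3*X*a o3 o1) + ((-3)*X*a o3 o2) + (18*X^+2*a o1 o0) + ((-9)*X^+2*a o1 o1) + ((-18)*X^+2*a o2 o0) + ((-9)*X^+2*a o2 o1) + (18*X^+2*a o2 o2)) * (I*I+1) + (((-6)*a o1 o0) + (3*a o1 o1) + (6*a o2 o0) + (3*a o2 o1) + ((-6)*a o2 o2) + (6*a o3 o3) + ((-3)*I*a o3 o1) + ((-3)*I*a o3 o2)) * (3*X*X-1))%R); [done | rewrite ?Eb2 ?Ea3 ?Eb3 ?Ec0 ?Ed0 ?Ec1 ?Ed1 ?Ee0 ?Ee1 ?Ee2 ?hI ?hX; ring | ring]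
  | apply: (certD 1 (((1)) * ((a o1 o1) + (-(a o3 o3))))%R); [done | rewrite ?Ee1; ring | ring]
  | apply: (certD 12 ((((-3)) + ((-9)*I*X)) * ((2*a o1 o0) + (-(a o1 o1)) + (-(a o1 o2)) + ((-3)*I*X*a o1 o1) + (3*I*X*a o1 o2)) + ((3) + ((-3)*I*X)) * ((2*a o2 o0) + (-(a o2 o1)) + (-(a o2 o2)) + ((-3)*I*X*a o2 o1) + (3*I*X*a o2 o2)) + ((6*X) + (2*I)) * ((a o3 o0) + (a o3 o1) + (a o3 o2) + ((-3)*X*a o3 o3)) + ((2*I)) * ((2*a o3 o0) + (-(a o3 o1)) + (-(a o3 o2)) + ((-3)*I*X*a o3 o1) + (3*I*X*a o3 o2)) + ((2) + (6*I*X)) * ((a o0 o0) + (a o1 o0) + (a o2 o0) + ((-3)*X*a o3 o0)) + ((2) + ((-6)*I*X)) * ((2*a o0 o0) + (-(a o1 o0)) + (-(a o2 o0)) + (3*I*X*a o1 o0) + ((-3)*I*X*a o2 o0)) + ((4)) * ((a o0 o1) + (a o1 o1) + (a o2 o1) + ((-3)*X*a o3 o1)) + (((-2))) * ((2*a o0 o1) + (-(a o1 o1)) + (-(a o2 o1)) + (3*I*X*a o1 o1) + ((-3)*I*X*a o2 o1)) + (((-6)) + (6*I*X)) * ((a o0 o0) + (-(a o3 o3))) + (((-12)*I*X)) * ((a o1 o1) + (-(a o3 o3))) + (((-12)*I*X)) * ((a o2 o2) + (-(a o3 o3))) + ((6*X*a o3 o1) + ((-6)*X*a o3 o2) + (18*X^+2*a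 o1 o0) + ((-27)*X^+2*a o1 o1) + (27*X^+2*a o1 o2) + ((-18)*X^+2*a o2 o0) + ((-9)*X^+2*a o2 o1) + (9*X^+2*a o2 o2)) * (I*I+1) + (((-6)*a o1 o0) + (9*a o1 o1) + ((-9)*a o1 o2) + (6*a o2 o0) + (3*a o2 o1) + ((-3)*a o2 o2) + (6*a o3 o3) + (6*I*a o3 o0)) * (3*X*X-1))%R); [done | rewrite ?Eb1 ?Eb2 ?Ea3 ?Eb3 ?Ec0 ?Ed0 ?Ec1 ?Ed1 ?Ee0 ?Ee1 ?Ee2 ?hI ?hX; ring | ring]
  | apply: (certD 12 ((((-12)*X)) * ((a o1 o0) + (a o1 o1) + (a o1 o2) + ((-3)*X*a o1 o3)) + (((-3)*X) + ((-3)*I)) * ((2*a o1 o0) + (-(a o1 o1)) + (-(a o1 o2)) + ((-3)*I*X*a o1 o1) + (3*I*X*a o1 o2)) + ((3*X) + ((-3)*I)) * ((2*a o2 o0) + (-(a o2 o1)) + (-(a o2 o2)) + ((-3)*I*X*a o2 o1) + (3*I*X*a o2 o2)) + ((4)) * ((a o3 o0) + (a o3 o1) + (a o3 o2) + ((-3)*X*a o3 o3)) + ((1) + (3*I*X)) * ((2*a o3 o0) + (-(a o3 o1)) + (-(a o3 o2)) + ((-3)*I*X*a o3 o1) + (3*I*X*a o3 o2)) + ((6*X) + (2*I)) * ((a o0 o0) + (a o1 o0) + (a o2 o0) + ((-3)*X*a o3 o0)) + (((-4)*I)) * ((2*a o0 o0) + (-(a o1 o0)) + (-(a o2 o0)) +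 (3*I*X*a o1 o0) + ((-3)*I*X*a o2 o0)) + ((6*X) + ((-2)*I)) * ((a o0 o1) + (a o1 o1) + (a o2 o1) + ((-3)*X*a o3 o1)) + (((-3)*X) + (I)) * ((2*a o0 o1) + (-(a o1 o1)) + (-(a o2 o1)) + (3*I*X*a o1 o1) + ((-3)*I*X*a o2 o1)) + (((-6)*X) + (6*I)) * ((a o0 o0) + (-(a o3 o3))) + ((12*X)) * ((a o1 o1) + (-(a o3 o3))) + (((-6)*X) + ((-6)*I)) * ((a o2 o2) + (-(a o3 o3))) + ((12*X*a o1 o0) + ((-12)*X*a o1 o1) + (9*X*a o1 o2) + ((-12)*X*a o2 o0) + ((-6)*X*a o2 o1) + (9*X*a o2 o2) + (9*X^+2*a o3 o1) + ((-9)*X^+2*a o3 o2)) * (I*I+1) + (((-12)*a o1 o3) + (6*a o3 o0) + (3*a o3 o1) + (3*a o3 o2) + (3*I*a o1 o2) + ((-3)*I*a o2 o2)) * (3*X*X-1))%R); [done | rewrite ?Ea1 ?Eb1 ?Eb2 ?Ea3 ?Eb3 ?Ec0 ?Ed0 ?Ec1 ?Ed1 ?Ee0 ?Ee1 ?Ee2 ?hI ?hX; ring | ring]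
  | apply: (certD 12 (((3) + ((-3)*I*X)) * ((2*a o2 o0) + (-(a o2 o1)) + (-(a o2 o2)) + ((-3)*I*X*a o2 o1) + (3*I*X*a o2 o2)) + ((6*X) + (2*I)) * ((a o3 o0) + (a o3 o1) + (a o3 o2) + ((-3)*X*a o3 o3)) + ((2*I)) * ((2*a o3 o0) + (-(a o3 o1)) + (-(a o3 o2)) + ((-3)*I*X*a o3 o1) + (3*I*X*a o3 o2)) + ((2) + (6*I*X)) * ((a o0 o0) + (a o1 o0) + (a o2 o0) + ((-3)*X*a o3 o0)) + (((-1)) + (3*I*X)) * ((2*a o0 o0) + (-(a o1 o0)) + (-(a o2 o0)) + (3*I*X*a o1 o0) + ((-3)*I*X*a o2 o0)) + ((4)) * ((a o0 o1) + (a o1 o1) + (a o2 o1) + ((-3)*X*a o3 o1)) + (((-2))) * ((2*a o0 o1) + (-(a o1 o1)) + (-(a o2 o1)) + (3*I*X*a o1 o1) + ((-3)*I*X*a o2 o1)) + (((-12)*I*X)) * ((a o0 o0) + (-(a o3 o3))) + (((-6)) + (6*I*X)) * ((a o1 o1) + (-(a o3 o3))) + (((-12)*I*X)) * ((a o2 o2) + (-(a o3 o3))) + ((6*X*a o3 o1) + ((-6)*X*a o3 o2) + ((-9)*X^+2*a o1 o0) + (9*X^+2*a o2 o0) + ((-9)*X^+2*a o2 o1) + (9*X^+2*a o2 o2)) * (I*I+1) + ((3*a o1 o0) + ((-3)*a o2 o0) + (3*a o2 o1) + ((-3)*a o2 o2) + (6*a o3 o3) + (6*I*a o3 o0)) *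 (3*X*X-1))%R); [done | rewrite ?Eb2 ?Ea3 ?Eb3 ?Ec0 ?Ed0 ?Ec1 ?Ed1 ?Ee0 ?Ee1 ?Ee2 ?hI ?hX; ring | ring]
  | apply: (certD 12 ((((-3)) + (3*I*X)) * ((2*a o2 o0) + (-(a o2 o1)) + (-(a o2 o2)) + ((-3)*I*X*a o2 o1) + (3*I*X*a o2 o2)) + ((6*X) + ((-2)*I)) * ((a o3 o0) + (a o3 o1) + (a o3 o2) + ((-3)*X*a o3 o3)) + ((3*X) + (I)) * ((2*a o3 o0) + (-(a o3 o1)) + (-(a o3 o2)) + ((-3)*I*X*a o3 o1) + (3*I*X*a o3 o2)) + ((4)) * ((a o0 o0) + (a o1 o0) + (a o2 o0) + ((-3)*X*a o3 o0)) + ((1) + (3*I*X)) * ((2*a o0 o0) + (-(a o1 o0)) + (-(a o2 o0)) + (3*I*X*a o1 o0) + ((-3)*I*X*a o2 o0)) + ((2) + ((-6)*I*X)) * ((a o0 o1) + (a o1 o1) + (a o2 o1) + ((-3)*X*a o3 o1)) + (((-1)) + (3*I*X)) * ((2*a o0 o1) + (-(a o1 o1)) + (-(a o2 o1)) + (3*I*X*a o1 o1) + ((-3)*I*X*a o2 o1)) + (((-6)) + ((-6)*I*X)) * ((a o0 o0) + (-(a o3 o3))) + ((12*I*X)) * ((a o1 o1) + (-(a o3 o3))) + ((12*I*X)) * ((a o2 o2) + (-(a o3 o3))) + ((3*X*a o3 o1) + ((-3)*X*a o3 o2) + ((-9)*X^+2*a o1 o0) + ((-9)*X^+2*a o1 o1)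 + (9*X^+2*a o2 o0) + (18*X^+2*a o2 o1) + ((-9)*X^+2*a o2 o2)) * (I*I+1) + ((3*a o1 o0) + (3*a o1 o1) + ((-3)*a o2 o0) + ((-6)*a o2 o1) + (3*a o2 o2) + (6*a o3 o3) + ((-3)*I*a o3 o1) + ((-3)*I*a o3 o2)) * (3*X*X-1))%R); [done | rewrite ?Eb2 ?Ea3 ?Eb3 ?Ec0 ?Ed0 ?Ec1 ?Ed1 ?Ee0 ?Ee1 ?Ee2 ?hI ?hX; ring | ring]
  | apply: (certD 1 (((1)) * ((a o2 o2) + (-(a o3 o3))))%R); [done | rewrite ?Ee2; ring | ring]
  | apply: (certD 12 ((((-12)*X)) * ((a o2 o0) + (a o2 o1) + (a o2 o2) + ((-3)*X*a o2 o3)) + ((4)) * ((a o3 o0) + (a o3 o1) + (a o3 o2) + ((-3)*X*a o3 o3)) + ((1) + (3*I*X)) * ((2*a o3 o0) + (-(a o3 o1)) + (-(a o3 o2)) + ((-3)*I*X*a o3 o1) + (3*I*X*a o3 o2)) + ((6*X) + (2*I)) * ((a o0 o0) + (a o1 o0) + (a o2 o0) + ((-3)*X*a o3 o0)) + ((2*I)) * ((2*a o0 o0) + (-(a o1 o0)) + (-(a o2 o0)) + (3*I*X*a o1 o0) + ((-3)*I*X*a o2 o0)) + ((6*X) + ((-2)*I)) * ((a o0 o1) + (a o1 o1) + (a o2 o1) + ((-3)*X*a o3 o1)) + (((-3)*X) + (I)) * ((2*a o0 o1) + (-(a o1 o1)) + (-(a o2 o1)) + (3*I*X*a o1 o1)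 + ((-3)*I*X*a o2 o1)) + (((-6)*X) + ((-6)*I)) * ((a o0 o0) + (-(a o3 o3))) + (((-6)*X) + (6*I)) * ((a o1 o1) + (-(a o3 o3))) + ((12*X)) * ((a o2 o2) + (-(a o3 o3))) + (((-6)*X*a o1 o0) + ((-3)*X*a o1 o1) + (6*X*a o2 o0) + (3*X*a o2 o1) + (9*X^+2*a o3 o1) + ((-9)*X^+2*a o3 o2)) * (I*I+1) + (((-12)*a o2 o3) + (6*a o3 o0) + (3*a o3 o1) + (3*a o3 o2) + (3*I*a o1 o1) + ((-3)*I*a o2 o1)) * (3*X*X-1))%R); [done | rewrite ?Ea2 ?Ea3 ?Eb3 ?Ec0 ?Ed0 ?Ec1 ?Ed1 ?Ee0 ?Ee1 ?Ee2 ?hI ?hX; ring | ring]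
  | apply: (certD 12 (((3*X) + ((-3)*I)) * ((2*a o2 o0) + (-(a o2 o1)) + (-(a o2 o2)) + ((-3)*I*X*a o2 o1) + (3*I*X*a o2 o2)) + ((4)) * ((a o3 o0) + (a o3 o1) + (a o3 o2) + ((-3)*X*a o3 o3)) + ((1) + (3*I*X)) * ((2*a o3 o0) + (-(a o3 o1)) + (-(a o3 o2)) + ((-3)*I*X*a o3 o1) + (3*I*X*a o3 o2)) + (((-6)*X) + (2*I)) * ((a o0 o0) + (a o1 o0) + (a o2 o0) + ((-3)*X*a o3 o0)) + (((-3)*X) + (-(I))) * ((2*a o0 o0) + (-(a o1 o0)) + (-(a o2 o0)) + (3*I*X*a o1 o0) + ((-3)*I*X*a o2 o0)) + ((6*X) + ((-2)*I)) * ((a o0 o1) + (a o1 o1) + (a o2 o1) + ((-3)*X*a o3 o1)) + (((-3)*X) + (I)) * ((2*a o0 o1) + (-(a o1 o1)) + (-(a o2 o1)) + (3*I*X*a o1 o1) + ((-3)*I*X*a o2 o1)) + ((12*X)) * ((a o0 o0) + (-(a o3 o3))) + (((-6)*X) + (6*I)) * ((a o1 o1) + (-(a o3 o3))) + (((-6)*X) + ((-6)*I)) * ((a o2 o2) + (-(a o3 o3))) + ((3*X*a o1 o0) + ((-3)*X*a o1 o1) + ((-3)*X*a o2 o0) + ((-6)*X*a o2 o1) + (9*X*a o2 o2) + (9*X^+2*a o3 o1) + ((-9)*X^+2*a o3 o2)) * (I*I+1) + (((-6)*a o3 o0) + (3*a o3 o1) + (3*a o3 o2) + (3*I*a o1 o0)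 + (3*I*a o1 o1) + ((-3)*I*a o2 o0) + ((-3)*I*a o2 o2)) * (3*X*X-1))%R); [done | rewrite ?Eb2 ?Ea3 ?Eb3 ?Ec0 ?Ed0 ?Ec1 ?Ed1 ?Ee0 ?Ee1 ?Ee2 ?hI ?hX; ring | ring]
  | apply: (certD 12 ((((-6)*X)) * ((2*a o2 o0) + (-(a o2 o1)) + (-(a o2 o2)) + ((-3)*I*X*a o2 o1) + (3*I*X*a o2 o2)) + ((4)) * ((a o3 o0) + (a o3 o1) + (a o3 o2) + ((-3)*X*a o3 o3)) + ((1) + (3*I*X)) * ((2*a o3 o0) + (-(a o3 o1)) + (-(a o3 o2)) + ((-3)*I*X*a o3 o1) + (3*I*X*a o3 o2)) + ((6*X) + (2*I)) * ((a o0 o0) + (a o1 o0) + (a o2 o0) + ((-3)*X*a o3 o0)) + ((2*I)) * ((2*a o0 o0) + (-(a o1 o0)) + (-(a o2 o0)) + (3*I*X*a o1 o0) + ((-3)*I*X*a o2 o0)) + (((-6)*X) + ((-2)*I)) * ((a o0 o1) + (a o1 o1) + (a o2 o1) + ((-3)*X*a o3 o1)) + ((3*X) + (I)) * ((2*a o0 o1) + (-(a o1 o1)) + (-(a o2 o1)) + (3*I*X*a o1 o1) + ((-3)*I*X*a o2 o1)) + (((-6)*X) + ((-6)*I)) * ((a o0 o0) + (-(a o3 o3))) + ((12*X)) * ((a o1 o1) + (-(a o3 o3))) + (((-6)*X) + (6*I)) * ((a o2 o2) + (-(a o3 o3))) + (((-6)*X*a o1 o0) + ((-3)*X*a o1 o1)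 + (6*X*a o2 o0) + (3*X*a o2 o1) + (9*X^+2*a o3 o1) + ((-9)*X^+2*a o3 o2)) * (I*I+1) + ((6*a o3 o0) + ((-9)*a o3 o1) + (3*a o3 o2) + ((-3)*I*a o1 o1) + ((-3)*I*a o2 o1) + (6*I*a o2 o2)) * (3*X*X-1))%R); [done | rewrite ?Eb2 ?Ea3 ?Eb3 ?Ec0 ?Ed0 ?Ec1 ?Ed1 ?Ee0 ?Ee1 ?Ee2 ?hI ?hX; ring | ring]
  | apply: (certD 12 (((3*X) + (3*I)) * ((2*a o2 o0) + (-(a o2 o1)) + (-(a o2 o2)) + ((-3)*I*X*a o2 o1) + (3*I*X*a o2 o2)) + ((4)) * ((a o3 o0) + (a o3 o1) + (a o3 o2) + ((-3)*X*a o3 o3)) + (((-2)) + ((-6)*I*X)) * ((2*a o3 o0) + (-(a o3 o1)) + (-(a o3 o2)) + ((-3)*I*X*a o3 o1) + (3*I*X*a o3 o2)) + (((-4)*I)) * ((a o0 o0) + (a o1 o0) + (a o2 o0) + ((-3)*X*a o3 o0)) + ((3*X) + (-(I))) * ((2*a o0 o0) + (-(a o1 o0)) + (-(a o2 o0)) + (3*I*X*a o1 o0) + ((-3)*I*X*a o2 o0)) + ((4*I)) * ((a o0 o1) + (a o1 o1) + (a o2 o1) + ((-3)*X*a o3 o1)) + (((-2)*I)) * ((2*a o0 o1) + (-(a o1 o1)) + (-(a o2 o1)) + (3*I*X*a o1 o1) + ((-3)*I*X*a o2 o1)) + (((-6)*X) + (6*I)) * ((a o0 o0) + (-(a o3 o3)))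 + (((-6)*X) + ((-6)*I)) * ((a o1 o1) + (-(a o3 o3))) + ((12*X)) * ((a o2 o2) + (-(a o3 o3))) + ((3*X*a o1 o0) + (6*X*a o1 o1) + ((-3)*X*a o2 o0) + (3*X*a o2 o1) + ((-9)*X*a o2 o2) + ((-18)*X^+2*a o3 o1) + (18*X^+2*a o3 o2)) * (I*I+1) + ((6*a o3 o1) + ((-6)*a o3 o2) + ((-3)*I*a o1 o0) + (3*I*a o2 o0) + (3*I*a o2 o1) + ((-3)*I*a o2 o2)) * (3*X*X-1))%R); [done | rewrite ?Eb2 ?Ea3 ?Eb3 ?Ec0 ?Ed0 ?Ec1 ?Ed1 ?Ee0 ?Ee1 ?Ee2 ?hI ?hX; ring | ring]
  | apply: (certD 1 (0)%R); [done |  ring | ring] ].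
Qed.

End Spec.

Arguments rank_up {C I X u v}.
Arguments rank_lo {C I X u v}.
Arguments Hpsd {C I X u v}.
Arguments ext_gen {C I X u v}.

Theorem mainTheorem10 (R : realType) :
  let x : R := 1 / Num.sqrt 3 in
  \rank (Hmx x) = 2%N /\ extremal_ray (@Mplus_e R[i] 4) (Hmx x).
Proof.
move=> x.
have HE : Hmx x = Hg ('i%C : R[i]) (x%:C)%C by [].
have hx0 : 0 <= x by rewrite /x divr_ge0 ?ler01 ?sqrtr_ge0.
have hs : Num.sqrt (3 : R) ^+ 2 = 3 by rewrite sqr_sqrtr // ler0n.
have hs0 : Num.sqrt (3 : R) != 0.
  by apply/eqP => h; move: hs; rewrite h expr0n /= => /eqP; rewrite eq_sym pnatr_eq0.
have h3 : 3 * x * x = 1.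
  have -> : 3 * x * x = 3 / (Num.sqrt 3 ^+ 2) by rewrite /x; field.
  by rewrite hs divff // pnatr_eq0.
have G : good ('i%C : R[i]) (x%:C)%C (6^-1) (2^-1).
  split; first by rewrite complexiE -expr2 sqrCi addNr.
  split.
    have -> : 3 * (x%:C)%C * (x%:C)%C = ((3 * x * x)%:C)%C by rewrite !rmorphM rmorph_nat.
    by rewrite h3 subrr.
  split; first by rewrite mulfV ?subrr // pnatr_eq0.
  split; first by rewrite mulfV ?subrr // pnatr_eq0.
  split; first by rewrite complexiE conjCi.
  split; first by rewrite geC0_conj // ler0c.
  have h6 : 0 <= (6^-1 : R[i]) by rewrite invr_ge0 ler0n.
  by split; first rewrite geC0_conj.
rewrite HE; split.
  by apply/eqP; rewrite eqn_leq (rank_up G) (rank_lo G).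
split; first by split; [exact: (Hpsd G) | exact: Hdiag].
split.
  apply/eqP => h; have := congr1 (fun M : 'M[R[i]]_4 => M o3 o3) h.
  by rewrite /Hg !mxE /= => /eqP; rewrite oner_eq0.
move=> a b ha hb hab.
have [ea ta] := ext_gen G _ _ ha hb hab.
have hba : Hg (C:=R[i]) (complex.Complex 0 1) (x%:C)%C = b + a by rewrite addrC.
have [eb tb] := ext_gen G _ _ hb ha hba.
split.
  exists (complex.Re (a o3 o3)); rewrite RRe_real ?ger0_real //.
  by split; first rewrite -ler0c RRe_real ?ger0_real.
exists (complex.Re (b o3 o3)); rewrite RRe_real ?ger0_real //.
by split; first rewrite -ler0c RRe_real ?ger0_real.
Qed.
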